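(* Let $j\in\mathbb{N}$ and let $n=p_1^{a_1}\cdots p_k^{a_k}$ with $k\in\mathbb{N}$, distinct primes $p_1,\dots,p_k$ and $a_1,\dots,a_k\in\mathbb{N}$. Then \[c_j(p_1^{a_1}\cdots p_k^{a_k})=(-1)^{1-j}\,j\;{}_{k+1}F_k\big(a_1+1,\dots,a_k+1,\,1-j;\ \underbrace{1,\dots,1}_{k-1},\,2;\ 1\big).\]
   Context: For $j,n\in\mathbb{N}$, $c_j(n)$ is the number of ordered $j$-tuples of integers each $\ge 2$ whose product is $n$. The generalised hypergeometric series is ${}_kF_n(a_1,\dots,a_k;b_1,\dots,b_n;z)=\sum_{m=0}^\infty \frac{a_1^{\overline m}\cdots a_k^{\overline m}\,z^m}{b_1^{\overline m}\cdots b_n^{\overline m}\,m!}$, with the rising factorial $a^{\overline m}=\prod_{i=0}^{m-1}(a+i)$, $a^{\overline 0}=1$; here the series terminates since $(1-j)^{\overline m}=0$ for $m\ge j$. *)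

(* Defs.v *)
From HB Require Import structures.
From mathcomp Require Import all_boot all_order all_algebra.
From mathcomp Require Import all_classical all_reals all_analysis.
Set Implicit Arguments. Unset Strict Implicit. Unset Printing Implicit Defensive.
Import Order.TTheory GRing.Theory Num.Theory.
Local Open Scope ring_scope.

(* For n >= 1 every such entry lies in [2, n], so we range the entries over
   'I_(n.+1) = {0,...,n}; this is exact for n >= 1 (the theorem only uses
   n >= 1). *)
Definition c_count (j n : nat) : nat :=
  #|[set t : j.-tuple 'I_n.+1 |
       all (fun x : 'I_n.+1 => (2 <= (x : nat))%N) t &&
       ((\prod_(x <- t) (x : nat))%N == n)]|.

Definition rising {R : comNzRingType} (a : R) (m : nat) : R :=
  \prod_(i < m) (a + i%:R).

Definition hyp_term {R : realType} (as_ bs : seq R) (z : R) (m : nat) : R :=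
  (\prod_(a <- as_) rising a m) * z ^+ m /
  ((\prod_(b <- bs) rising b m) * (m`!)%:R).

Definition hypF {R : realType} (as_ bs : seq R) (z : R) : R :=
  limn (fun N : nat => \sum_(0 <= m < N) hyp_term as_ bs z m).

(* Main.v *)
Require Import Defs.
From HB Require Import structures.
From mathcomp Require Import all_boot all_order all_algebra.
From mathcomp Require Import all_classical all_reals all_analysis.
From mathcomp Require Import ring.
Import Order.TTheory GRing.Theory Num.Theory.
Set Implicit Arguments. Unset Strict Implicit. Unset Printing Implicit Defensive.

Definition cnt (M j n : nat) : nat :=
  \sum_(t : j.-tuple 'I_M.+1)
     (all (fun x : 'I_M.+1 => (2 <= (x : nat))%N) t &&
       ((\prod_(x <- t) (x : nat))%N == n) : nat).
Lemma sum_tuple_cons (T : finType) j (F : j.+1.-tuple T -> nat) :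
  \sum_(t : j.+1.-tuple T) F t = \sum_(x : T) \sum_(t : j.-tuple T) F [tuple of x :: t].
Proof.
rewrite pair_big /=.
pose h := (fun p : T * j.-tuple T => [tuple of p.1 :: p.2]).
have hb : {on [pred i | true], bijective h}.
  exists (fun t : j.+1.-tuple T => (thead t, [tuple of behead t])) => [[x t] _|t _] /=.
    by rewrite /h /= theadE; congr pair; apply: val_inj.
  by rewrite /h [t in _ = t]tuple_eta; apply: val_inj.
by rewrite (reindex h hb).
Qed.

Lemma cnt0 M n : cnt M 0 n = (n == 1).
Proof.
rewrite /cnt (big_pred1 [tuple]); last by move=> t; rewrite (tuple0 t); apply/esym/eqP.
by rewrite /= big_nil eq_sym.
Qed.

Lemma cntS M j n :
  cnt M j.+1 n = \sum_(d < M.+1 | (1 < d) && (d %| n)) cnt M j (n %/ d).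
Proof.
rewrite /cnt sum_tuple_cons [RHS]big_mkcond /=; apply: eq_bigr => x _.
case: (ltnP 1 x) => hx /=; last by rewrite big1 // => t _ /=; rewrite leqNgt hx.
case: (boolP (x %| n)) => hd.
  apply: eq_bigr => t _; rewrite big_cons.
  have hx0 : 0 < x by apply: ltn_trans hx.
  by rewrite -{1}(divnK hd) mulnC eqn_pmul2r.
rewrite big1 // => t _; rewrite big_cons.
case: (all _ _) => //=; apply/eqP; rewrite eqb0.
apply: contra hd => /eqP <-.
exact: dvdn_mulr.
Qed.

Lemma c_count_cnt j n : c_count j n = cnt n j n.
Proof.
rewrite /c_count /cnt -sum1_card big_mkcond /=.
by apply: eq_bigr => t _; rewrite inE; case: (_ && _).
Qed.


Definition Np k (p : 'I_k -> nat) (f : 'I_k -> nat) := \prod_(r < k) p r ^ f r.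

Lemma Np_gt0 k (p : 'I_k -> nat) f : (forall r, prime (p r)) -> 0 < Np p f.
Proof.
move=> pr; rewrite /Np prodn_gt0 // => r; rewrite expn_gt0 prime_gt0 //.
Qed.

Lemma logn_Np k (p : 'I_k -> nat) f q : (forall r, prime (p r)) -> prime q ->
  logn q (Np p f) = \sum_(r < k) f r * (q == p r).
Proof.
move=> pr pq; rewrite /Np.
suff /andP[_ /eqP ->] : (0 < \prod_(r < k) p r ^ f r) && ((\sum_(r < k) f r * (q == p r)) == logn q (\prod_(r < k) p r ^ f r)) by [].
apply: (big_ind2 (fun x y => (0 < y) && (x == logn q y))).
- by rewrite /= logn1.
- move=> x1 x2 y1 y2 /andP[h1 /eqP ->] /andP[h2 /eqP ->].
  by rewrite muln_gt0 h1 h2 /= lognM.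
- move=> r _; rewrite expn_gt0 prime_gt0 //= lognX logn_prime //.
Qed.

Lemma logn_Np_p k (p : 'I_k -> nat) f s : (forall r, prime (p r)) -> injective p ->
  logn (p s) (Np p f) = f s.
Proof.
move=> pr ip; rewrite logn_Np // (bigD1 s) //= eqxx muln1 big1 ?addn0 //.
move=> r hr; case: eqP => [/ip e|]; last by rewrite muln0.
by rewrite e eqxx in hr.
Qed.

Lemma Np_split k (p : 'I_k -> nat) e b : (forall r, e r <= b r) ->
  Np p b = Np p e * Np p (fun r => b r - e r).
Proof.
move=> h; rewrite /Np -big_split /=; apply: eq_bigr => r _.
by rewrite -expnD subnKC.
Qed.

Lemma Np_eq k (p : 'I_k -> nat) b d : (forall r, prime (p r)) -> injective p ->
  d %| Np p b -> d = Np p (fun r => logn (p r) d).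
Proof.
move=> pr ip hd.
have b0 := Np_gt0 b pr.
have d0 : 0 < d by apply: dvdn_gt0 hd.
apply: eqn_from_log => //; first exact: Np_gt0.
move=> q; case: (boolP (prime q)) => pq; last by rewrite /logn (negbTE pq).
rewrite logn_Np //.
case: (pickP (fun r => q == p r)) => [s /eqP qs|none].
  rewrite (bigD1 s) //= -qs eqxx muln1 big1 ?addn0 // => r hr.
  case: eqP => [e|]; last by rewrite muln0.
  by rewrite qs in e; move/ip: e => e; rewrite e eqxx in hr.
rewrite big1; last by move=> r _; rewrite none muln0.
apply/eqP; rewrite -leqn0.
apply: leq_trans (dvdn_leq_log q b0 hd) _.
by rewrite logn_Np // big1 // => r _; rewrite none muln0.
Qed.

Lemma Np_eq1 k (p : 'I_k -> nat) b : (forall r, prime (p r)) -> injective p ->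
  (Np p b == 1) = [forall r, b r == 0].
Proof.
move=> pr ip; apply/eqP/forallP => [h r|h].
  by rewrite -(logn_Np_p b r pr ip) h logn1.
by rewrite /Np big1 // => r _; rewrite (eqP (h r)).
Qed.

Lemma logn_le_Np k (p : 'I_k -> nat) b d r : (forall r, prime (p r)) -> injective p ->
  d %| Np p b -> logn (p r) d <= b r.
Proof.
move=> pr ip hd; rewrite -(logn_Np_p b r pr ip).
exact: dvdn_leq_log (Np_gt0 b pr) hd.
Qed.

Lemma Np_dvd k (p : 'I_k -> nat) e b : (forall r, e r <= b r) -> Np p e %| Np p b.
Proof. by move=> h; rewrite (Np_split p h) dvdn_mulr. Qed.

Lemma bridge k (p : 'I_k -> nat) a b (F : nat -> nat) :
  (forall r, prime (p r)) -> injective p -> (forall r, b r <= a r) ->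
  \sum_(d < (Np p a).+1 | (0 < d) && (d %| Np p b)) F d =
  \sum_(e : {ffun 'I_k -> 'I_(\sum_(r < k) a r).+1} | [forall r, e r <= b r])
      F (Np p (fun r => e r)).
Proof.
move=> pr ip hba.
set S := (\sum_(r < k) a r).+1.
have hS : forall r, a r < S.
  by move=> r; rewrite ltnS (bigD1 r) //= leq_addr.
have hle : forall e : 'I_k -> nat, (forall r, e r <= b r) -> Np p e < (Np p a).+1.
  move=> e he; rewrite ltnS; apply: dvdn_leq; first exact: Np_gt0.
  by apply: Np_dvd => r; apply: leq_trans (he r) (hba r).
rewrite (partition_big (fun e : {ffun 'I_k -> 'I_S} => inord (Np p (fun r => e r)) : 'I_(Np p a).+1)
   (fun d : 'I_(Np p a).+1 => (0 < d) && (d %| Np p b))); last first.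
  move=> e /forallP he; rewrite inordK ?hle // Np_gt0 //=.
  by apply: Np_dvd.
apply: eq_bigr => d /andP[d0 dd].
have hl : forall r, logn (p r) d < S.
  move=> r; apply: leq_ltn_trans (hS r); apply: leq_trans (hba r).
  exact: logn_le_Np.
pose e0 : {ffun 'I_k -> 'I_S} := [ffun r => inord (logn (p r) d)].
have e0E : forall r, (e0 r : nat) = logn (p r) d by move=> r; rewrite ffunE inordK.
have Ne0 : Np p (fun r => e0 r) = d.
  by rewrite [RHS](Np_eq pr ip dd) /Np; apply: eq_bigr => r _; congr (_ ^ _); apply: e0E.
rewrite [RHS](big_pred1 e0) ?Ne0 // => e /=.
apply/andP/eqP => [[/forallP he /eqP hd]|->].
  have hd' : Np p (fun r => e r) = d by rewrite -hd inordK ?hle.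
  apply/ffunP => r; apply: val_inj => /=; rewrite e0E -hd'.
  by rewrite logn_Np_p.
split; first by apply/forallP => r; rewrite e0E; apply: logn_le_Np dd.
by apply/eqP/val_inj; rewrite /= inordK Ne0.
Qed.

Fixpoint gM (M i n : nat) : nat :=
  if i is i'.+1 then (\sum_(d < M.+1 | (0 < d) && (d %| n)) gM M i' (n %/ d))%N
  else (n == 1)%N.


Lemma hockey n i : \sum_(x < n.+1) 'C((x + i).-1, x) = 'C(n + i, n).
Proof.
elim: n => [|n IH]; first by rewrite big_ord1 !bin0.
by rewrite big_ord_recr /= IH addSn /= [in RHS]binS addnC.
Qed.

Lemma hockey_rev n i : \sum_(x < n.+1) 'C((n - x + i).-1, n - x) = 'C(n + i, n).
Proof.
rewrite -hockey (reindex_inj rev_ord_inj) /=; apply: eq_bigr => x _.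
by rewrite subSS subKn // -ltnS.
Qed.

Lemma prod_ind k (c : 'I_k -> bool) (G : 'I_k -> nat) :
  \prod_(r < k) (c r * G r) = if [forall r, c r] then \prod_(r < k) G r else 0.
Proof.
case: (boolP [forall r, c r]) => [/forallP h|/forallPn [r hr]].
  by apply: eq_bigr => r _; rewrite h mul1n.
by rewrite (bigD1 r) //= (negbTE hr) mul0n.
Qed.

Lemma gNp k (p : 'I_k -> nat) a i b :
  (forall r, prime (p r)) -> injective p -> (forall r, b r <= a r) ->
  gM (Np p a) i (Np p b) = \prod_(r < k) 'C((b r + i).-1, b r).
Proof.
move=> pr ip; elim: i b => [|i IH] b hb.
  rewrite /= Np_eq1 //.
  have -> : \prod_(r < k) 'C((b r + 0).-1, b r) = \prod_(r < k) ((b r == 0) * 1).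
    by apply: eq_bigr => r _; rewrite addn0 muln1; case: (b r) => [|m] //=; rewrite bin_small.
  by rewrite prod_ind big1 //; case: [forall _, _].
rewrite /= (bridge (fun d => gM (Np p a) i (Np p b %/ d)) pr ip hb).
set S := (\sum_(r < k) a r).+1.
have hS : forall r, a r < S.
  by move=> r; rewrite ltnS (bigD1 r) //= leq_addr.
pose T (r : 'I_k) (x : 'I_S) := (x <= b r) * 'C((b r - x + i).-1, b r - x).
have -> : \sum_(e : {ffun 'I_k -> 'I_S} | [forall r, e r <= b r])
      gM (Np p a) i (Np p b %/ Np p (fun r => e r)) =
    \sum_(e : {ffun 'I_k -> 'I_S}) \prod_(r < k) T r (e r).
  rewrite big_mkcond; apply: eq_bigr => e _; rewrite /T prod_ind.
  case: (boolP [forall r, _]) => // /forallP he.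
  rewrite (Np_split p he) mulKn ?Np_gt0 // IH //.
  by move=> r; apply: leq_trans (leq_subr _ _) (hb r).
rewrite -bigA_distr_bigA /=; apply: eq_bigr => r _.
have hbr : (b r).+1 <= S by apply: leq_ltn_trans (hb r) (hS r).
rewrite addnS /= -hockey_rev (big_ord_widen _ (fun x => 'C((b r - x + i).-1, b r - x)) hbr).
rewrite [RHS]big_mkcond /=; apply: eq_bigr => x _; rewrite ltnS /T.
by case: (x <= b r); rewrite ?mul1n ?mul0n.
Qed.

Local Open Scope ring_scope.

Definition Hs {R : nzRingType} (G : nat -> R) (j : nat) : R :=
  \sum_(i < j.+1) (-1) ^+ (j + i) * ('C(j, i))%:R * G i.

Lemma HsS {R : nzRingType} (G : nat -> R) j :
  Hs G j.+1 + Hs G j = \sum_(i < j.+1) (-1) ^+ (j + i) * ('C(j, i))%:R * G i.+1.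
Proof.
rewrite /Hs big_ord_recl [in X in _ + X]big_ord_recl /=.
have e1 : forall i : 'I_j.+1, (-1) ^+ (j.+1 + bump 0 i) * ('C(j.+1, bump 0 i))%:R * G (bump 0 i)
   = (-1) ^+ (j + i) * ('C(j, i.+1))%:R * G i.+1 + (-1) ^+ (j + i) * ('C(j, i))%:R * G i.+1 :> R.
  move=> i; rewrite /bump /= add1n binS natrD mulrDr mulrDl addSn addnS !exprS.
  by rewrite mulN1r mulN1r opprK.
under eq_bigr => i _ do rewrite e1.
rewrite big_split /= [X in _ + (X + _) + _]big_ord_recr /= (bin_small (ltnSn j)) !bin0 mulr0n mulr0 mul0r addr0 !addn0.
rewrite exprS mulN1r !mulr1.
set A := \sum_(i < j) _.
set B := \sum_(i < j.+1) _.
have -> : \sum_(i < j) (-1) ^+ (j + bump 0 i) * ('C(j, bump 0 i))%:R * G (bump 0 i) = - A.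
  rewrite /A -sumrN; apply: eq_bigr => i _.
  by rewrite /bump /= add1n addnS exprS !mulN1r !mulNr.
by rewrite mulNr addrACA addNr add0r [A + B]addrC addrK.
Qed.

Lemma cnt_h {R : nzRingType} M j n : (0 < M)%N ->
  (cnt M j n)%:R = Hs (fun i => (gM M i n)%:R) j :> R.
Proof.
move=> M0; elim: j n => [|j IH] n.
  by rewrite cnt0 /Hs big_ord1 /= mulr1 mul1r.
rewrite cntS natr_sum.
under eq_bigr => d _ do rewrite IH.
apply: (addIr (Hs (fun i => (gM M i n)%:R) j)); rewrite HsS.
pose o1 : 'I_M.+1 := Ordinal (M0 : (1 < M.+1)%N).
have -> : \sum_(i < j.+1) (-1) ^+ (j + i) * ('C(j, i))%:R * ((gM M i.+1 n)%:R : R) =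
   \sum_(d < M.+1 | (0 < d)%N && (d %| n)%N) Hs (fun i => (gM M i (n %/ d))%:R) j.
  rewrite /Hs exchange_big /=; apply: eq_bigr => i _.
  by rewrite natr_sum mulr_sumr.
rewrite [RHS](bigD1 o1) /= ?dvd1n // divn1 addrC; congr (_ + _).
apply: eq_bigl => d; rewrite [RHS]andbC andbA; congr andb.
by case: d => [[|[|d]] hd].
Qed.


Lemma limn_fin (R : realType) (u : nat -> R) j : (forall m, (j <= m)%N -> u m = 0) ->
  limn (fun N : nat => \sum_(0 <= m < N) u m) = \sum_(m < j) u m.
Proof.
move=> hu; apply: lim_near_cst.
  exact: norm_hausdorff.
near=> N.
have hjN : (j <= N)%N by near: N; exact: nbhs_infty_ge.
rewrite big_mkord -(subnKC hjN) big_split_ord /= [X in _ + X = _]big1 ?addr0 // => i _.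
by apply: hu; rewrite leq_addr.
Unshelve. all: by end_near.
Qed.


Lemma sign_int (R : realType) j : (0 < j)%N -> (-1 : R) ^ (1 - j%:Z) = (-1) ^+ j.-1.
Proof.
move=> j0; rewrite expN1r; congr (_ ^+ _).
case: j j0 => // j _ /=.
by rewrite intS opprD addrA subrr add0r abszN.
Qed.

Lemma prod_shift a m : (\prod_(i < m) (a.+1 + i) = 'C(a + m, a) * m`!)%N.
Proof.
have h : (\prod_(i < m) (a.+1 + i) * a`! = (a + m)`!)%N.
  elim: m => [|m IH]; first by rewrite big_ord0 mul1n addn0.
  by rewrite big_ord_recr /= mulnAC IH addnS factS addSn mulnC.
apply/eqP; rewrite -(eqn_pmul2r (fact_gt0 a)) h -mulnA [(m`! * _)%N]mulnC.
by rewrite -(bin_fact (leq_addr m a)) addKn.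
Qed.

Lemma rising_nat (R : realType) (x m : nat) : rising (x%:R : R) m = (\prod_(i < m) (x + i))%:R.
Proof. by rewrite /rising natr_prod; apply: eq_bigr => i _; rewrite natrD. Qed.

Lemma ffact_prod n m : (\prod_(i < m) (n - i) = n ^_ m)%N.
Proof.
elim: m => [|m IH]; first by rewrite big_ord0 ffactn0.
by rewrite big_ord_recr /= IH ffactnSr.
Qed.

Lemma rising_neg (R : realType) j m : (m < j)%N ->
  rising (1 - j%:R : R) m = (-1) ^+ m * ((j.-1) ^_ m)%:R.
Proof.
move=> hm; have -> : (-1 : R) ^+ m = \prod_(i < m) (-1) by rewrite prodr_const card_ord.
rewrite /rising -ffact_prod natr_prod -big_split /=.
apply: eq_bigr => i _.
have hi : (i < j.-1)%N by apply: leq_trans (ltn_ord i) _; rewrite -ltnS prednK // (leq_ltn_trans _ hm).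
rewrite natrB ?(ltnW hi) //.
case: j hm hi => // j _ /= hi.
rewrite -natr1; ring.
Qed.

Lemma rising_zero (R : realType) j m : (0 < j)%N -> (j <= m)%N ->
  rising (1 - j%:R : R) m = 0.
Proof.
move=> j0 hm; have hj : (j.-1 < m)%N by rewrite (leq_trans _ hm) // ltn_predL.
rewrite /rising (bigD1 (Ordinal hj)) //=.
rewrite -{1}(prednK j0) -natr1; rewrite (_ : 1 - ((j.-1)%:R + 1) + (j.-1)%:R = 0 :> R) ?mul0r //.
ring.
Qed.

Lemma prod_nseq (R : realType) n (c : R) (F : R -> R) : \prod_(x <- nseq n c) F x = F c ^+ n.
Proof. by elim: n => [|n IH]; rewrite ?big_nil ?expr0 // big_cons IH exprS. Qed.

Lemma rising1 (R : realType) m : rising (1 : R) m = (m`!)%:R.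
Proof.
rewrite (_ : (1 : R) = (0.+1)%:R) // rising_nat prod_shift bin0 mul1n //.
Qed.

Lemma rising2 (R : realType) m : rising (2 : R) m = (m.+1`!)%:R.
Proof.
by rewrite rising_nat prod_shift add1n bin1 factS.
Qed.

Lemma risingS (R : realType) x m : rising ((x.+1)%:R : R) m = ('C(x + m, x) * m`!)%:R.
Proof. by rewrite rising_nat prod_shift. Qed.

Lemma sign2 (R : realType) j m : (0 < j)%N -> (-1 : R) ^+ (j + m.+1) = (-1) ^+ j.-1 * (-1) ^+ m.
Proof.
case: j => // j _ /=; rewrite addSn addnS !exprS exprD; ring.
Qed.

Lemma term_eq (R : realType) k (a : 'I_k -> nat) j m : (0 < k)%N -> (m < j)%N ->
 (-1 : R) ^+ (j.-1) * j%:R *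
   hyp_term ([seq (a i).+1%:R | i <- enum 'I_k] ++ [:: 1 - j%:R])
            (nseq k.-1 (1 : R) ++ [:: 2]) 1 m
 = (-1) ^+ (j + m.+1) * ('C(j, m.+1))%:R * (\prod_(r < k) 'C(a r + m, a r))%:R.
Proof.
move=> k0 hm.
have j0 : (0 < j)%N by apply: leq_ltn_trans hm.
rewrite /hyp_term big_cat /= big_map big_seq1 big_cat /= big_seq1 prod_nseq expr1n mulr1.
have hP : \prod_(j1 <- enum 'I_k) rising ((a j1).+1%:R : R) m
    = (\prod_(r < k) 'C(a r + m, a r))%:R * (m`!%:R) ^+ k.
  rewrite big_enum /=.
  under eq_bigl => r do rewrite inE.
  under eq_bigr => r _ do rewrite risingS natrM.
  by rewrite big_split /= natr_prod prodr_const card_ord.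
rewrite hP rising1 rising2 rising_neg // sign2 //.
have hJ : (j%:R * ((j.-1) ^_ m)%:R : R) = ('C(j, m.+1))%:R * (m.+1`!)%:R.
  by rewrite -!natrM bin_ffact -{1}(prednK j0) ffactnS prednK.
have F0 : (m`!%:R : R) != 0 by rewrite pnatr_eq0 -lt0n fact_gt0.
have G0 : (m.+1`!%:R : R) != 0 by rewrite pnatr_eq0 -lt0n fact_gt0.
set P := (\prod_(r < k) _)%:R.
set F := (m`!%:R : R).
set G := (m.+1`!%:R : R).
set J := (((j.-1) ^_ m)%:R : R).
set C := ('C(j, m.+1)%:R : R).
set jR := (j%:R : R).
set s := (-1 : R) ^+ j.-1.
set t := (-1 : R) ^+ m.
have eF : F ^+ k = F * F ^+ k.-1 by rewrite -exprS prednK.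
rewrite eF.
rewrite (_ : s * jR * (P * (F * F ^+ k.-1) * (t * J) / (F ^+ k.-1 * G * F)) = s * t * P * (jR * J) / G).
  by rewrite hJ; field.
field; apply/andP; split => //; apply/andP; split => //; exact: expf_neq0.
Qed.

Unset Implicit Arguments.

Theorem theorem1 (R : realType) (j k : nat) (p a : 'I_k -> nat) :
  (0 < j)%N -> (0 < k)%N ->
  (forall i, prime (p i)) -> injective p ->
  (forall i, (0 < a i)%N) ->
  (c_count j (\prod_(i < k) p i ^ a i)%N)%:R =
    (-1 : R) ^ (1 - j%:Z) * j%:R *
    hypF ([seq (a i).+1%:R | i <- enum 'I_k] ++ [:: 1 - j%:R])
         (nseq k.-1 (1 : R) ++ [:: 2]) 1.
Proof.
move=> j0 k0 pr ip a0.
have -> : (\prod_(i < k) p i ^ a i)%N = Np p a by [].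
rewrite c_count_cnt cnt_h /Hs; last exact: Np_gt0 a pr.
under eq_bigr => i _ do rewrite (@gNp k p a i a pr ip (fun r => leqnn _)).
rewrite big_ord_recl /=.
have z : (\prod_(r < k) 'C((a r + 0).-1, a r))%N = 0%N.
  by rewrite (bigD1 (Ordinal k0)) //= addn0 bin_small ?mul0n // ltn_predL.
rewrite z mulr0 add0r.
rewrite /hypF (@limn_fin R _ j); last first.
  by move=> m hm; rewrite /hyp_term big_cat /= big_seq1 (@rising_zero R j m j0 hm) mulr0 !mul0r.
rewrite sign_int // mulr_sumr; apply: eq_bigr => i _.
rewrite term_eq // /bump /= add1n addnS.
by under eq_bigr => r _ do rewrite addnS.
Qed.
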